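(* Let $N\ge 1$ be an integer, $\Omega>0$, $\bar\gamma>0$, and consider the high-SNR asymptotic delay-tolerant throughput $$\tilde\rho(\tau)=\frac{1-\tau}{\ln 2}\left[2\psi(N)+\ln\bar\gamma+2\ln\Omega-\ln\!\left(\frac{1-\tau}{\tau}\right)\right],\qquad \tau\in(0,1).$$ Then the throughput-optimal energy harvesting time, i.e. the maximizer of $\tilde\rho$ over $(0,1)$, is $$\tau_{tol}^*=\frac{1}{1+W\!\left(\bar\gamma\,\Omega^2 e^{2\psi(N)-1}\right)}.$$ *)

(* Defs.v *)
From Stdlib Require Import Reals ClassicalEpsilon.
From Coquelicot Require Import Coquelicot.
Open Scope R_scope.

Fixpoint harmonic (n : nat) : R :=
  match n with
  | O => 0
  | S m => harmonic m + / INR (S m)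
  end.

Definition EulerGamma : R :=
  real (Lim_seq (fun n => harmonic n - ln (INR n))).

Definition digamma_nat (N : nat) : R := - EulerGamma + harmonic (N - 1).

(* Principal branch W_0 of the Lambert W function: the unique w >= -1
   with w * e^w = x (well defined for x >= -1/e; used here for x > 0). *)
Definition LambertW (x : R) : R :=
  epsilon (inhabits 0) (fun w => -1 <= w /\ w * exp w = x).

Definition rho_tilde (N : nat) (Omega gbar tau : R) : R :=
  (1 - tau) / ln 2 *
  (2 * digamma_nat N + ln gbar + 2 * ln Omega - ln ((1 - tau) / tau)).

(* Main.v *)
Require Import Defs.
From Stdlib Require Import Reals Lra ClassicalEpsilon.
Open Scope R_scope.

Lemma ln_lt_sub1 t : 0 < t -> t <> 1 -> ln t < t - 1.
Proof.
  intros Ht Hne.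
  assert (ln t <> 0).
  { intro H0. apply Hne. rewrite <- (exp_ln t Ht), H0. apply exp_0. }
  pose proof (exp_ineq1 _ H). rewrite exp_ln in H0 by exact Ht. lra.
Qed.

Lemma LambertW_spec x : 0 < x -> 0 < LambertW x /\ LambertW x * exp (LambertW x) = x.
Proof.
  intros Hx.
  assert (Hex : exists w, -1 <= w /\ w * exp w = x).
  { destruct (IVT (fun w => w * exp w - x) 0 x) as [z [Hz1 Hz2]].
    - intros a. apply continuity_pt_minus. apply continuity_pt_mult.
      apply derivable_continuous_pt, derivable_pt_id.
      apply derivable_continuous_pt, derivable_pt_exp.
      apply continuity_pt_const. intros u v; reflexivity.
    - exact Hx.
    - rewrite exp_0. lra.
    - pose proof (exp_ineq1 x ltac:(lra)). nra.
    - exists z. split; lra. }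
  unfold LambertW.
  destruct (epsilon_spec (inhabits 0) (fun w => -1 <= w /\ w * exp w = x) Hex) as [H1 H2].
  set (w := epsilon _ _) in *.
  split; [|exact H2].
  destruct (Rle_or_lt w 0) as [Hw|Hw]; [|exact Hw].
  pose proof (exp_pos w). nra.
Qed.

Theorem proposition2 (N : nat) (Omega gbar : R)
  (HN : (1 <= N)%nat) (HOmega : 0 < Omega) (Hgbar : 0 < gbar) :
  let tau_opt :=
    1 / (1 + LambertW (gbar * Omega ^ 2 * exp (2 * digamma_nat N - 1))) in
  0 < tau_opt < 1 /\
  forall tau : R, 0 < tau < 1 -> tau <> tau_opt ->
    rho_tilde N Omega gbar tau < rho_tilde N Omega gbar tau_opt.
Proof.
  intros tau_opt.
  set (x := gbar * Omega ^ 2 * exp (2 * digamma_nat N - 1)).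
  assert (Hx : 0 < x).
  { unfold x. pose proof (exp_pos (2 * digamma_nat N - 1)).
    pose proof (pow_lt Omega 2 HOmega). apply Rmult_lt_0_compat; [|lra].
    apply Rmult_lt_0_compat; lra. }
  destruct (LambertW_spec x Hx) as [Hw Hwe].
  set (w := LambertW x) in *.
  assert (Hlnx : ln x = ln w + w).
  { rewrite <- Hwe, ln_mult, ln_exp; [reflexivity | lra | apply exp_pos]. }
  assert (Hlnx2 : ln x = ln gbar + 2 * ln Omega + (2 * digamma_nat N - 1)).
  { unfold x. rewrite ln_mult, ln_mult, ln_exp, ln_pow; try lra.
    - simpl. lra.
    - apply pow_lt; lra.
    - apply Rmult_lt_0_compat; [lra| apply pow_lt; lra].
    - apply exp_pos. }
  set (C := 2 * digamma_nat N + ln gbar + 2 * ln Omega).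
  assert (HC : C = ln w + w + 1) by (unfold C; lra).
  assert (Ht : tau_opt = 1 / (1 + w)) by reflexivity.
  assert (Hln2 : 0 < ln 2).
  { rewrite <- ln_1. apply ln_increasing; lra. }
  assert (Hopt : rho_tilde N Omega gbar tau_opt = w / ln 2).
  { unfold rho_tilde. fold C. rewrite Ht.
    replace ((1 - 1 / (1 + w)) / (1 / (1 + w))) with w by (field; lra).
    rewrite HC. field. split; lra. }
  split.
  { rewrite Ht. split.
    - apply Rdiv_lt_0_compat; lra.
    - apply (Rmult_lt_reg_r (1 + w)); [lra|].
      unfold Rdiv. rewrite Rmult_assoc, Rinv_l by lra. lra. }
  intros tau [H0 H1] Hne.
  rewrite Hopt. unfold rho_tilde. fold C.
  set (s := (1 - tau) / tau).
  assert (Hs : 0 < s) by (unfold s; apply Rdiv_lt_0_compat; lra).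
  assert (Htau : tau = 1 / (1 + s)) by (unfold s; field; lra).
  assert (Hsw : s <> w).
  { intro E. apply Hne. rewrite Ht, <- E. exact Htau. }
  assert (Hk : ln (w / s) < w / s - 1).
  { apply ln_lt_sub1. apply Rdiv_lt_0_compat; lra.
    intro E. apply Hsw. unfold Rdiv in E.
    apply (Rmult_eq_compat_r s) in E. rewrite Rmult_assoc, Rinv_l in E by lra. lra. }
  unfold Rdiv at 1 in Hk; rewrite ln_mult, ln_Rinv in Hk by (try apply Rinv_0_lt_compat; lra).
  assert (Hk2 : s * (ln w - ln s) < w - s).
  { replace (w - s) with (s * (w / s - 1)) by (field; lra).
    apply Rmult_lt_compat_l; lra. }
  assert (Key : (1 - tau) * (C - ln s) < w).
  { rewrite HC, Htau.
    replace (1 - 1 / (1 + s)) with (s / (1 + s)) by (field; lra).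
    apply (Rmult_lt_reg_r (1 + s)); [lra|].
    replace (s / (1 + s) * (ln w + w + 1 - ln s) * (1 + s)) with (s * (ln w + w + 1 - ln s)) by (field; lra).
    nra. }
  replace ((1 - tau) / ln 2 * (C - ln s)) with (((1 - tau) * (C - ln s)) / ln 2) by (field; lra).
  unfold Rdiv. apply Rmult_lt_compat_r; [apply Rinv_0_lt_compat; lra| exact Key].
Qed.
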